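(* (1) If $\rho,\sigma\in S_n$ are disjoint (no index is moved by both), then $X^\rho_{\vec1}\otimes X^\sigma_{\vec1}=X^\sigma_{\vec1}\otimes X^\rho_{\vec1}=X^{\rho\sigma}_{\vec1}$. (2) Every bare defect $X^\sigma_{\vec1}$ can be written as a product of bare transposition defects: there are transpositions $\tau_1,\dots,\tau_m$ with $\sigma=\tau_1\cdots\tau_m$ and $X^\sigma_{\vec1}=X^{\tau_1}_{\vec1}\otimes(X^{\tau_2}_{\vec1}\otimes(\cdots\otimes X^{\tau_m}_{\vec1}))$.
   Context: Let $\mathcal{C}$ be a modular tensor category, $\mathrm{Irr}(\mathcal{C})$ its finite set of isomorphism classes of simple objects (containing $1$), $a\mapsto a^*$ duality, $C$ its fusion ring (free $\mathbb{Z}$-module on $\mathrm{Irr}(\mathcal{C})$, product $a\otimes b=\sum_cN_{ab}^cc$). Fix $n\ge2$. $C^{\boxtimes n}=C^{\otimes_{\mathbb{Z}}n}$ has basis the multilayer anyons $\vec a=a_1\boxtimes\cdots\boxtimes a_n$, layerwise product, unit $\vec1$; permutations compose right to left. For $\sigma\in S_n$ with orbits $\mathcal{O}(\sigma)$ (cycles incl. fixed points), $\vec a$ is $\sigma$-fixed iff constant on orbits. $C_\sigma$: free $\mathbb{Z}$-module on symbols $X^\sigma_{\vec a}$ ($\vec a$ $\sigma$-fixed), identified with $R_\sigma=\bigotimes_{O\in\mathcal{O}(\sigma)}C$; $X^\sigma_r$ for $r\in R_\sigma$; $X^\sigma_{\vec1}$ is the bare $\sigma$-defect; $C_{\mathrm{id}}=C^{\boxtimes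 n}$. Confinement $c_\sigma:C^{\boxtimes n}\to R_\sigma$, linear, $c_\sigma(\vec a)=\bigotimes_O(\bigotimes_{k\in O}a_k)$. Anyon–defect fusion $\vec a\otimes X^\sigma_{\vec b}=X^\sigma_{\vec b}\otimes\vec a:=X^\sigma_{c_\sigma(\vec a)\cdot\vec b}$. A $\sigma$-deconfinement $d_\sigma(\vec b)$: any $d\in C^{\boxtimes n}$ with nonnegative coefficients and $d\otimes X^\sigma_{\vec1}=X^\sigma_{\vec b}$. For $t=(ij)$, $\Omega_t=\sum_c\vec e_c$ ($c$ in layer $i$, $c^*$ in layer $j$, $1$ elsewhere). Following the paper's algorithm, $F(\rho,\sigma)$: write $\rho=t_1\cdots t_m$ with each disjoint cycle $(i_1\cdots i_l)$ written as $(i_1i_2)\cdots(i_{l-1}i_l)$; $\pi_{m+1}=\sigma$, $\pi_k=t_k\pi_{k+1}$; $F=\prod\Omega_{t_k}$ over $k$ with both indices of $t_k$ in a common cycle of $\pi_{k+1}$. Defect fusion is bilinear with $X^\rho_{\vec a}\otimes X^\sigma_{\vec b}:=(d_\rho(\vec a)\otimes d_\sigma(\vec b)\otimes F(\rho,\sigma))\otimes X^{\rho\sigma}_{\vec1}$. *)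

(* Defs.v *)
From HB Require Import structures.
From mathcomp Require Import all_boot all_order all_algebra all_fingroup.
Set Implicit Arguments.
Unset Strict Implicit.
Unset Printing Implicit Defensive.
Import GRing.Theory Num.Theory.
Local Open Scope ring_scope.

(* Fusion rules of the modular tensor category C: the finite set Irr(C) of
   simple labels, the unit 1, duality a |-> a^*, and fusion coefficients
   N a b c = N_{ab}^c. *)
Record fusion_rules := FusionRules {
  lab : finType;
  lunit : lab;
  ldual : lab -> lab;
  Nf : lab -> lab -> lab -> nat }.

(* Axioms satisfied by the fusion ring of a modular tensor category
   (commutative since C is braided, associative, unital, duality involutive,
   N_{ab}^1 = [b = a^*], Frobenius reciprocity). *)
Definition fusion_ring_axioms (F : fusion_rules) : Prop :=
  let N := @Nf F in let one := lunit F in let du := @ldual F in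
  (forall a b c, N a b c = N b a c) /\
  (forall a b c d, (\sum_e N a b e * N e c d)%N = (\sum_e N b c e * N a e d)%N) /\
  (forall a b, N one a b = (a == b) :> nat) /\
  (forall a, du (du a) = a) /\
  (forall a b, N a b one = (b == du a) :> nat) /\
  (forall a b c, N a b c = N (du a) c b).

Section Defs.
Variables (F : fusion_rules) (n : nat).
Local Notation L := (lab F).
Local Notation N := (@Nf F).
Local Notation one := (lunit F).

(* The fusion ring C = free Z-module on Irr(C). *)
Definition celt := {ffun L -> int}.
Definition cbasis (a : L) : celt := [ffun c : L => (c == a)%:R].
Definition cmul (x y : celt) : celt :=
  [ffun c : L => \sum_(a : L) \sum_(b : L) x a * y b * (N a b c)%:R].
Definition cunit : celt := cbasis one.
Definition cprod (s : seq L) : celt := foldr (fun a x => cmul (cbasis a) x) cunit s.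

(* C^{boxtimes n}: free Z-module on multilayer anyons a_1 ⊠ ... ⊠ a_n *)
Definition mvec := {ffun 'I_n -> L}.
Definition melt := {ffun mvec -> int}.
Definition mbasis (v : mvec) : melt := [ffun w : mvec => (w == v)%:R].
Definition vone : mvec := [ffun => one].
Definition munit : melt := mbasis vone.
Definition mmul (x y : melt) : melt :=
  [ffun w : mvec => \sum_(u : mvec) \sum_(v : mvec) x u * y v * \prod_k (N (u k) (v k) (w k))%:R].

(* Paper composition (right to left): rlcomp r s = r ∘ s.
   (In MathComp, (s * r)%g x = r (s x).) *)
Definition rlcomp (r s : {perm 'I_n}) : {perm 'I_n} := (s * r)%g.

Definition sfixed (s : {perm 'I_n}) (v : mvec) : bool := [forall k, v (s k) == v k].
Definition orbit_rep (s : {perm 'I_n}) (i : 'I_n) : bool :=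
  [forall j in porbit s i, (i <= j)%N].

(* R_sigma = ⊗_{O} C, realised as the free Z-module on sigma-fixed vectors
   (supported on sigma-fixed vectors); orbitwise product. *)
Definition rmul (s : {perm 'I_n}) (x y : melt) : melt :=
  [ffun w : mvec => (sfixed s w)%:R *
     \sum_(u : mvec) \sum_(v : mvec) x u * y v * \prod_(i | orbit_rep s i) (N (u i) (v i) (w i))%:R].

Definition conf_basis (s : {perm 'I_n}) (v : mvec) : melt :=
  [ffun w : mvec => (sfixed s w)%:R *
     \prod_(i | orbit_rep s i) cprod [seq v k | k <- enum (porbit s i)] (w i)].
Definition confine (s : {perm 'I_n}) (x : melt) : melt :=
  [ffun w : mvec => \sum_(v : mvec) x v * conf_basis s v w].

(* anyon-defect fusion: x ⊗ X^s_r = X^s_{c_s(x) . r} *)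
Definition act (s : {perm 'I_n}) (x r : melt) : melt := rmul s (confine s x) r.

Definition is_deconf (s : {perm 'I_n}) (r d : melt) : Prop :=
  (forall v, 0 <= d v) /\ act s d munit = r.

Definition omvec (i j : 'I_n) (c : L) : mvec :=
  [ffun k => if k == i then c else if k == j then @ldual F c else one].
Definition Omega (i j : 'I_n) : melt := [ffun w : mvec => \sum_(c : L) (w == omvec i j c)%:R].

(* F(rho, sigma) for a given decomposition ts = [t_1; ...; t_m] of rho *)
Definition Fstep (t : 'I_n * 'I_n) (acc : {perm 'I_n} * melt) :=
  (rlcomp (tperm t.1 t.2) acc.1,
   if t.2 \in porbit acc.1 t.1 then mmul (Omega t.1 t.2) acc.2 else acc.2).
Definition Ffac (ts : seq ('I_n * 'I_n)) (s : {perm 'I_n}) : melt :=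
  (foldr Fstep (s, munit) ts).2.

(* the cycle (i, r i, ..., r^{l-1} i) written as (i1 i2)(i2 i3)...(i_{l-1} i_l) *)
Definition chain (r : {perm 'I_n}) (i : 'I_n) : seq ('I_n * 'I_n) :=
  [seq (iter k r i, iter k.+1 r i) | k <- iota 0 (#|porbit r i|).-1].
(* ts is a decomposition of r as prescribed by the algorithm (any order of
   the disjoint cycles, any starting point in each cycle) *)
Definition cycle_decomp (r : {perm 'I_n}) (ts : seq ('I_n * 'I_n)) : Prop :=
  exists st : seq 'I_n,
    perm_eq [seq porbit r i | i <- st] [seq O <- enum (porbits r) | (1 < #|pred_of_set O|)%N]
    /\ ts = flatten [seq chain r i | i <- st].

(* defects X^s_r, r in R_s *)
Definition defect := ({perm 'I_n} * melt)%type.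
Definition bare (s : {perm 'I_n}) : defect := (s, munit).

(* z is a value of X^{x.1}_{x.2} ⊗ X^{y.1}_{y.2} for some admissible choice of
   deconfinements and of the decomposition used for F *)
Definition is_fusion (x y z : defect) : Prop :=
  exists dx dy ts,
    is_deconf x.1 x.2 dx /\ is_deconf y.1 y.2 dy /\ cycle_decomp x.1 ts /\
    z = (rlcomp x.1 y.1,
         act (rlcomp x.1 y.1) (mmul (mmul dx dy) (Ffac ts y.1)) munit).

(* x ⊗ y = w: the fusion is defined and every admissible choice gives w *)
Definition fuses_to (x y w : defect) : Prop :=
  (exists z, is_fusion x y z) /\ (forall z, is_fusion x y z -> z = w).

Definition is_transposition (t : {perm 'I_n}) : Prop :=
  exists i j : 'I_n, i != j /\ t = tperm i j.

(* w = X^{t1}_1 ⊗ (X^{t2}_1 ⊗ (... ⊗ X^{tm}_1)); empty product = vacuum *)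
Fixpoint nested (ts : seq {perm 'I_n}) (w : defect) : Prop :=
  match ts with
  | [::] => w = bare 1%g
  | [:: t] => w = bare t
  | t :: ts' => exists w', nested ts' w' /\ fuses_to (bare t) w' w
  end.

Definition perm_seqprod (ts : seq {perm 'I_n}) : {perm 'I_n} := foldr rlcomp 1%g ts.

Definition disjoint_perms (r s : {perm 'I_n}) : Prop := forall i, r i = i \/ s i = i.

End Defs.

(* Main.v *)
Require Import Defs.
From HB Require Import structures.
From mathcomp Require Import all_boot all_order all_algebra all_fingroup.
From mathcomp Require Import zify ring.
Set Implicit Arguments.
Unset Strict Implicit.
Unset Printing Implicit Defensive.
Import Order.TTheory GRing.Theory Num.Theory.
Local Open Scope ring_scope.

Section Fus.
Variable F : fusion_rules.
Hypothesis ax : fusion_ring_axioms F.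
Local Notation L := (lab F).
Local Notation N := (@Nf F).
Local Notation one := (lunit F).
Local Notation du := (@ldual F).
Local Notation cpr := (@Defs.cprod F).

Lemma NC a b c : N a b c = N b a c. Proof. by case: ax. Qed.
Lemma NA a b c d : (\sum_e N a b e * N e c d)%N = (\sum_e N b c e * N a e d)%N.
Proof. by case: ax => _ []. Qed.
Lemma N1l a b : N one a b = (a == b) :> nat. Proof. by case: ax => _ [] _ []. Qed.
Lemma duK a : du (du a) = a. Proof. by case: ax => _ [] _ [] _ []. Qed.
Lemma N1o a b : N a b one = (b == du a) :> nat. Proof. by case: ax => _ [] _ [] _ [] _ []. Qed.
Lemma NF a b c : N a b c = N (du a) c b. Proof. by case: ax => _ [] _ [] _ [] _ []. Qed.
Lemma N1r a b : N a one b = (a == b) :> nat. Proof. by rewrite NC N1l. Qed.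

Lemma sum_ind (T : finType) (G : T -> int) a0 : \sum_a (a == a0)%:R * G a = G a0.
Proof.
rewrite (bigD1 a0) //= eqxx mul1r big1 ?addr0 // => a /negbTE ->; by rewrite mul0r.
Qed.

Lemma cmulE (x y : celt F) c : cmul x y c = \sum_a \sum_b x a * y b * (N a b c)%:R.
Proof. by rewrite ffunE. Qed.

Lemma cmul_basisl a (y : celt F) c : cmul (cbasis a) y c = \sum_b y b * (N a b c)%:R.
Proof.
rewrite cmulE (eq_bigr (fun a' => (a' == a)%:R * \sum_b y b * (N a' b c)%:R)).
  by rewrite (sum_ind (fun a' => \sum_b y b * (N a' b c)%:R)).
by move=> a' _; rewrite mulr_sumr; apply: eq_bigr => b _; rewrite ffunE mulrA.
Qed.

Lemma cmul_basis a b : cmul (cbasis a) (cbasis b) = [ffun c => (N a b c)%:R].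
Proof.
apply/ffunP => c; rewrite cmul_basisl ffunE.
rewrite (eq_bigr (fun b' => (b' == b)%:R * (N a b' c)%:R)); last by move=> b' _; rewrite ffunE.
by rewrite (sum_ind (fun b' => (N a b' c)%:R)).
Qed.

Lemma cmulC (x y : celt F) : cmul x y = cmul y x.
Proof.
apply/ffunP => c; rewrite !cmulE exchange_big; apply: eq_bigr => a _; apply: eq_bigr => b _.
by rewrite NC [x b * _]mulrC.
Qed.

Lemma cmul1 (x : celt F) : cmul (cunit F) x = x.
Proof.
apply/ffunP => c; rewrite cmul_basisl.
rewrite (eq_bigr (fun b => (b == c)%:R * x b)); first by rewrite sum_ind.
by move=> b _; rewrite N1l mulrC eq_sym.
Qed.

Lemma cmul1r (x : celt F) : cmul x (cunit F) = x.
Proof. by rewrite cmulC cmul1. Qed.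

Lemma cmulA (x y z : celt F) : cmul (cmul x y) z = cmul x (cmul y z).
Proof.
apply/ffunP => d.
transitivity (\sum_a \sum_b \sum_c x a * y b * z c * (\sum_e N a b e * N e c d)%N%:R).
  rewrite cmulE.
  rewrite (eq_bigr (fun e => \sum_c \sum_a \sum_b x a * y b * z c * (N a b e * N e c d)%N%:R)); last first.
    move=> e _; apply: eq_bigr => c _; rewrite cmulE !mulr_suml; apply: eq_bigr => a _.
    rewrite !mulr_suml; apply: eq_bigr => b _; rewrite natrM; ring.
  rewrite exchange_big /=.
  transitivity (\sum_c \sum_a \sum_b \sum_e x a * y b * z c * (N a b e * N e c d)%N%:R).
    apply: eq_bigr => c _; rewrite exchange_big; apply: eq_bigr => a _; rewrite exchange_big //.
  rewrite exchange_big; apply: eq_bigr => a _; rewrite exchange_big; apply: eq_bigr => b _.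
  apply: eq_bigr => c _; rewrite natr_sum mulr_sumr //.
rewrite cmulE.
transitivity (\sum_a \sum_e \sum_b \sum_c x a * y b * z c * (N b c e * N a e d)%N%:R); last first.
  apply: eq_bigr => a _; apply: eq_bigr => e _; rewrite cmulE mulr_sumr mulr_suml.
  apply: eq_bigr => b _; rewrite mulr_sumr mulr_suml; apply: eq_bigr => c _; rewrite natrM; ring.
apply: eq_bigr => a _.
transitivity (\sum_b \sum_c \sum_e x a * y b * z c * (N b c e * N a e d)%N%:R).
  by apply: eq_bigr => b _; apply: eq_bigr => c _; rewrite NA natr_sum mulr_sumr.
rewrite [RHS]exchange_big; apply: eq_bigr => b _; rewrite [RHS]exchange_big //.
Qed.

Lemma cmulCA (x y z : celt F) : cmul x (cmul y z) = cmul y (cmul x z).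
Proof. by rewrite -cmulA (cmulC x) cmulA. Qed.

Lemma cpr_cat s1 s2 : cpr (s1 ++ s2) = cmul (cpr s1) (cpr s2).
Proof.
elim: s1 => [|a s1 IH] /=; first by rewrite cmul1.
by rewrite IH cmulA.
Qed.

Lemma cpr_rem a s : a \in s -> cpr s = cmul (cbasis a) (cpr (rem a s)).
Proof.
elim: s => [//|b s IH] ains /=.
case: (eqVneq b a) => [->//|ne].
have ains' : a \in s by move: ains; rewrite inE eq_sym (negbTE ne).
by rewrite /= IH // cmulCA.
Qed.

Lemma cpr_perm s1 s2 : perm_eq s1 s2 -> cpr s1 = cpr s2.
Proof.
elim: s1 s2 => [|a s1 IH] s2 p12.
  by move/perm_size: p12 => /esym/size0nil ->.
have ain : a \in s2 by rewrite -(perm_mem p12) mem_head.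
rewrite (cpr_rem ain) /= (IH (rem a s2)) //.
by rewrite -(perm_cons a) (perm_trans p12) // perm_to_rem.
Qed.

Lemma Nnz a b : exists c, (0 < N a b c)%N.
Proof.
case: (pickP (fun c => 0 < N a b c)%N) => [c Hc|H0]; first by exists c.
exfalso; have H := NA a b (du b) a.
rewrite big1 in H; last first.
  by move=> e _; move: (H0 e) => /negbT; rewrite lt0n negbK => /eqP ->.
move: H; rewrite (bigD1 one) //= N1o eqxx N1r eqxx; lia.
Qed.

Lemma sum1_nat (T : finType) (f : T -> nat) : (\sum_e f e)%N = 1%N ->
  exists e0, f e0 = 1%N /\ forall e, e != e0 -> f e = 0%N.
Proof.
move=> H; case: (pickP (fun e => 0 < f e)%N) => [e0 He0|H0]; last first.
  by move: H; rewrite big1 // => e _; move: (H0 e) => /negbT; rewrite lt0n negbK => /eqP.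
exists e0; move: H; rewrite (bigD1 e0) //= => H.
have Hr : (\sum_(i | i != e0) f i)%N = 0%N by lia.
split; first by lia.
move=> e ne; move/eqP: Hr; rewrite sum_nat_eq0 => /forallP /(_ e).
by rewrite ne /= => /eqP.
Qed.

Lemma sum1_int (T : finType) (f : T -> int) : (forall e, 0 <= f e) -> \sum_e f e = 1 ->
  exists e0, f e0 = 1 /\ forall e, e != e0 -> f e = 0.
Proof.
move=> f0 H; case: (pickP (fun e => 0 < f e)) => [e0 He0|H0]; last first.
  exfalso; move: H; rewrite big1 // => e _; move: (H0 e) (f0 e) => /negbT; rewrite -leNgt.
  by move=> a b; apply/eqP; rewrite eq_le a b.
exists e0; move: H; rewrite (bigD1 e0) //= => H.
have r0 : 0 <= \sum_(i | i != e0) f i by apply: sumr_ge0.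
have Hr : \sum_(i | i != e0) f i = 0 by move: He0 r0 H; move: (f e0) (\sum_(i | i != e0) f i) => A B; lia.
split; first by rewrite Hr addr0 in H.
move=> e ne; move/psumr_eq0P: Hr => /(_ (fun i _ => f0 i)); apply; exact: ne.
Qed.

Lemma cmul_ge0 (x y : celt F) c : (forall a, 0 <= x a) -> (forall b, 0 <= y b) -> 0 <= cmul x y c.
Proof.
move=> x0 y0; rewrite cmulE; apply: sumr_ge0 => a _; apply: sumr_ge0 => b _.
by rewrite !mulr_ge0 // ler0n.
Qed.

Lemma cbasis_ge0 (a c : L) : 0 <= cbasis a c. Proof. by rewrite ffunE ler0n. Qed.

Lemma cpr_ge0 s c : 0 <= cpr s c.
Proof.
elim: s c => [|a s IH] c /=; first exact: cbasis_ge0.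
by apply: cmul_ge0 => // b; apply: cbasis_ge0.
Qed.

Lemma cpr_nz s : exists c, 0 < cpr s c.
Proof.
elim: s => [|a s [c0 Hc0]] /=; first by exists one; rewrite ffunE eqxx.
have [c Hc] := Nnz a c0.
exists c; rewrite cmul_basisl (bigD1 c0) //=.
have r0 : 0 <= \sum_(i | i != c0) cpr s i * (N a i c)%:R.
  by apply: sumr_ge0 => b _; rewrite mulr_ge0 ?cpr_ge0 ?ler0n.
have : 0 < cpr s c0 * (N a c0 c)%:R by rewrite mulr_gt0 // ltr0n.
move: r0; move: (\sum_(i | i != c0) _) (cpr s c0 * _) => A B; lia.
Qed.

Lemma inv_simple c c' : (forall e, N c c' e = (e == one) :> nat) ->
  forall x, exists z, forall e, N c x e = (e == z) :> nat.
Proof.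
move=> Hcc x.
have ec' : c' = du c by move: (Hcc one); rewrite N1o eqxx; case: eqP.
have H := NA c' c x x.
rewrite (eq_bigr (fun e => (e == one) * N e x x)%N) in H; last by move=> e _; rewrite NC Hcc.
rewrite (bigD1 one) //= eqxx N1l eqxx big1 in H; last by move=> e /negbTE ->.
rewrite (eq_bigr (fun e => N c x e * N c x e)%N) in H; last first.
  by move=> e _; rewrite (NF c') ec' duK.
have [e0 [H1 H2]] := sum1_nat (esym H).
exists e0 => e; case: (eqVneq e e0) => [->|ne]; first by move: H1; clear; nia.
by move: (H2 e ne); clear; nia.
Qed.

End Fus.

Section Perm.
Variable T : finType.
Implicit Types (s p : {perm T}) (x y : T).

Lemma porbit_closed s x (A : {set T}) : x \in A -> (forall y, y \in A -> s y \in A) ->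
  porbit s x \subset A.
Proof.
move=> xA hA; apply/subsetP => y /porbitP [i ->].
elim: i => [|i IH]; first by rewrite expg0 perm1.
by rewrite expgSr permM; apply: hA.
Qed.

Lemma porbit_eq s x y : y \in porbit s x -> porbit s y = porbit s x.
Proof. by move=> h; apply/eqP; rewrite eq_porbit_mem. Qed.

Lemma porbit_s s x : porbit s (s x) = porbit s x.
Proof. by have := porbit_perm s 1 x; rewrite expg1. Qed.

Lemma porbit_sin s x y : y \in porbit s x -> s y \in porbit s x.
Proof. by move=> h; rewrite -(porbit_eq h) -(porbit_s s y) porbit_id. Qed.

Lemma porbit_fix s x : s x = x -> porbit s x = [set x].
Proof.
move=> sx; apply/eqP; rewrite eqEsubset; apply/andP; split.
  by apply: porbit_closed; rewrite ?inE // => y /set1P ->; rewrite sx inE.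
by rewrite sub1set porbit_id.
Qed.

Lemma porbit_agree s p x : (forall y, y \in porbit s x -> p y = s y) -> porbit p x = porbit s x.
Proof.
move=> h; apply/eqP; rewrite eqEsubset; apply/andP; split.
  by apply: porbit_closed; rewrite ?porbit_id // => y yin; rewrite h // porbit_sin.
have sub : porbit s x \subset porbit p x :&: porbit s x.
  apply: porbit_closed; first by rewrite inE !porbit_id.
  move=> y; rewrite inE => /andP [y1 y2]; rewrite inE porbit_sin // andbT -h //.
  exact: porbit_sin.
by apply: (subset_trans sub); apply: subsetIl.
Qed.

End Perm.

Lemma mul_eq1 (A B : int) : A * B = 1 -> 0 <= A -> 0 <= B -> A = 1.
Proof.
move=> h a b.
have A1 : A != 0 by apply/eqP => e; move: h; rewrite e mul0r.
have B1 : B != 0 by apply/eqP => e; move: h; rewrite e mulr0.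
have : 0 <= A * (B - 1) by rewrite mulr_ge0 //; lia.
rewrite mulrBr mulr1; lia.
Qed.

Section Multi.
Variable F : fusion_rules.
Hypothesis ax : fusion_ring_axioms F.
Variable n : nat.
Local Notation L := (lab F).
Local Notation N := (@Nf F).
Local Notation one := (lunit F).
Local Notation du := (@ldual F).
Local Notation cpr := (@Defs.cprod F).
Local Notation mvec := (mvec F n).
Local Notation melt := (melt F n).
Local Notation vone := (vone F n).
Local Notation munit := (munit F n).
Implicit Types (s p : {perm 'I_n}) (u v w z : mvec).

Lemma rep_ex s k : exists r, orbit_rep s r /\ k \in porbit s r.
Proof.
case: (arg_minnP (fun j : 'I_n => nat_of_ord j) (porbit_id s k)) => r Hr Hmin.
exists r; rewrite (porbit_eq Hr) porbit_id; split=> //.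
by apply/forall_inP => j; rewrite (porbit_eq Hr) => /Hmin.
Qed.

Lemma sfixed_orbit s w x y : sfixed s w -> y \in porbit s x -> w y = w x.
Proof.
move=> /forallP sf yin.
have : porbit s x \subset [set y | w y == w x].
  by apply: porbit_closed => [|y'] ; rewrite !inE // => /eqP <-; apply: sf.
by move/subsetP => /(_ y yin); rewrite inE => /eqP.
Qed.

Lemma sfixed_vone s : sfixed s vone.
Proof. by apply/forallP => k; rewrite !ffunE. Qed.

Lemma agree_reps s u w : sfixed s u -> sfixed s w ->
  (forall i, orbit_rep s i -> u i = w i) -> u = w.
Proof.
move=> su sw h; apply/ffunP => k; have [r [rr kr]] := rep_ex s k.
by rewrite (sfixed_orbit su kr) (sfixed_orbit sw kr) h.
Qed.

Lemma sfix_reps s w :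
  (sfixed s w)%:R * \prod_(i | orbit_rep s i) ((w i == one)%:R : int) = (w == vone)%:R.
Proof.
case: (eqVneq w vone) => [->|ne].
  by rewrite sfixed_vone big1 ?mulr1 // => i _; rewrite ffunE eqxx.
case sw: (sfixed s w); last by rewrite mul0r.
have [k wk] : exists k, w k != one.
  apply/existsP; apply: contraR ne; rewrite negb_exists => /forallP h.
  by apply/eqP/ffunP => k; rewrite ffunE; move: (h k); rewrite negbK => /eqP.
have [r [rr kr]] := rep_ex s k.
rewrite (bigD1 r) //= -(sfixed_orbit sw kr) (negbTE wk) /=.
by rewrite mul0r mulr0.
Qed.

Lemma mbasisE v w : mbasis v w = (w == v)%:R :> int. Proof. by rewrite ffunE. Qed.

Lemma conf_basisE s v w : conf_basis s v w =
  (sfixed s w)%:R * \prod_(i | orbit_rep s i) cpr [seq v k | k <- enum (porbit s i)] (w i).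
Proof. by rewrite ffunE. Qed.

Lemma conf_unit s v : (forall k, cpr [seq v k | k <- enum (porbit s k)] = cunit F) ->
  conf_basis s v = munit.
Proof.
move=> h; apply/ffunP => w; rewrite conf_basisE mbasisE -(sfix_reps s); congr (_ * _).
by apply: eq_bigr => i _; rewrite h ffunE.
Qed.

Lemma confine_basis s z : confine s (mbasis z) = conf_basis s z.
Proof.
apply/ffunP => w; rewrite ffunE.
rewrite (eq_bigr (fun v => (v == z)%:R * conf_basis s v w)); first by rewrite sum_ind.
by move=> v _; rewrite mbasisE.
Qed.

Definition Pf s v x := cpr [seq v k | k <- enum (porbit s x)].

Lemma conf_basisE' s v w : conf_basis s v w =
  (sfixed s w)%:R * \prod_(i | orbit_rep s i) Pf s v i (w i).
Proof. by rewrite ffunE. Qed.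

Lemma Pf_eq s v x y : y \in porbit s x -> Pf s v y = Pf s v x.
Proof. by move=> h; rewrite /Pf (porbit_eq h). Qed.

Lemma Pf_s s v x : Pf s v (s x) = Pf s v x.
Proof. by rewrite /Pf porbit_s. Qed.

Lemma prod_ge1 (I : finType) (P : pred I) (E : I -> int) :
  (forall i, P i -> 1 <= E i) -> 1 <= \prod_(i | P i) E i.
Proof.
move=> h; apply: (big_ind (fun x => 1 <= x)) => // x y hx hy.
by move: hx hy; clear; nia.
Qed.

Definition hch s v x := odflt one [pick c | 0 < Pf s v x c].

Lemma hch_pos s v x : 0 < Pf s v x (hch s v x).
Proof.
rewrite /hch; case: pickP => [c //|none].
have [c Hc] := cpr_nz ax [seq v k | k <- enum (porbit s x)].
by move: (none c); rewrite /Pf /= Hc.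
Qed.

Lemma hch_s s v x : hch s v (s x) = hch s v x.
Proof. by rewrite /hch Pf_s. Qed.

Lemma Pf_ge0 s v x c : 0 <= Pf s v x c.
Proof. exact: cpr_ge0. Qed.

Lemma conf_pos s v : exists w, 0 < conf_basis s v w.
Proof.
pose w : mvec := [ffun x => hch s v x].
have sw : sfixed s w by apply/forallP => x; rewrite !ffunE hch_s.
exists w; rewrite conf_basisE' sw mul1r; apply: prodr_gt0 => i _.
by rewrite ffunE hch_pos.
Qed.

Lemma conf_ge0 s v w : 0 <= conf_basis s v w.
Proof.
by rewrite conf_basisE' mulr_ge0 ?ler0n // prodr_ge0 // => i _; apply: Pf_ge0.
Qed.

Lemma conf_unit_inv s v : conf_basis s v = munit -> forall k, Pf s v k = cunit F.
Proof.
move=> H.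
have step1 k c : c != one -> Pf s v k c = 0.
  move=> nc.
  pose w : mvec := [ffun x => if x \in porbit s k then c else hch s v x].
  have sw : sfixed s w.
    apply/forallP => x; rewrite !ffunE.
    have -> : (s x \in porbit s k) = (x \in porbit s k) by rewrite porbit_sym porbit_s porbit_sym.
    by case: ifP => // _; rewrite hch_s.
  have := congr1 (fun f : melt => f w) H; rewrite /= conf_basisE' mbasisE sw mul1r.
  have -> : (w == vone) = false.
    apply/negbTE; apply: contra nc => /eqP wv; have := congr1 (fun f : mvec => f k) wv.
    by rewrite !ffunE porbit_id => ->.
  move/eqP/prodf_eq0 => [i ri]; rewrite ffunE; case: ifP => iin.
    by rewrite (Pf_eq _ iin) => /eqP.
  by move=> /eqP e; move: (hch_pos s v i); rewrite e ltxx.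
have Pone x : 0 < Pf s v x one.
  have [c Hc] := cpr_nz ax [seq v k | k <- enum (porbit s x)].
  case: (eqVneq c one) => [<-//|nc]; by move: Hc; rewrite -/(Pf s v x c) (step1 x c nc).
move=> k.
have := congr1 (fun f : melt => f vone) H; rewrite /= conf_basisE' mbasisE sfixed_vone eqxx mul1r.
have [r [rr kr]] := rep_ex s k.
rewrite (bigD1 r) //=.
have rest1 : 1 <= \prod_(i | orbit_rep s i && (i != r)) Pf s v i (vone i).
  apply: prod_ge1 => i _; rewrite ffunE; move: (Pone i); clear; lia.
have Pr := Pone r.
rewrite ffunE => E.
have Pr1 : Pf s v r one = 1.
  by move: E rest1 Pr; move: (Pf s v r one) (\prod_(i | _) _) => A B; clear; nia.
apply/ffunP => c; rewrite (Pf_eq _ kr) ffunE.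
case: (eqVneq c one) => [->|nc]; first by rewrite Pr1.
by rewrite step1.
Qed.

Lemma rmul_unit s (X : melt) : (forall w, ~~ sfixed s w -> X w = 0) -> rmul s X munit = X.
Proof.
move=> hX; apply/ffunP => w; rewrite ffunE.
have E u : \sum_v X u * munit v * \prod_(i | orbit_rep s i) (N (u i) (v i) (w i))%:R
    = X u * \prod_(i | orbit_rep s i) ((u i == w i) : nat)%:R.
  rewrite (eq_bigr (fun v => (v == vone)%:R *
      (X u * \prod_(i | orbit_rep s i) (N (u i) (v i) (w i))%:R))).
    rewrite sum_ind; congr (_ * _); apply: eq_bigr => i _; rewrite ffunE N1r //.
  by move=> v _; rewrite mbasisE; ring.
under eq_bigr do rewrite E.
case sw: (sfixed s w); last by rewrite mul0r hX ?sw.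
rewrite mul1r (bigD1 w) //= [X in _ + X]big1 => [|u nu].
  by rewrite addr0 big1 ?mulr1 // => i _; rewrite eqxx.
 case su: (sfixed s u); last by rewrite hX ?su ?mul0r.
have [i ri ni] : exists2 i, orbit_rep s i & u i != w i.
  apply/exists_inP; apply: contraR nu; rewrite negb_exists_in => /forall_inP h.
  by apply/eqP; apply: (agree_reps su sw) => i /h; rewrite negbK => /eqP.
by rewrite (bigD1 i) //= (negbTE ni) mul0r mulr0.
Qed.

Lemma confine_sfixed s (X : melt) w : ~~ sfixed s w -> confine s X w = 0.
Proof.
move=> nw; rewrite ffunE big1 // => v _; rewrite conf_basisE' (negbTE nw) mul0r mulr0 //.
Qed.

Lemma munit_sfixed s w : ~~ sfixed s w -> munit w = 0.
Proof.
move=> nw; rewrite mbasisE; case: eqP => // e; by move: nw; rewrite e sfixed_vone.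
Qed.

Lemma act_unit s (X : melt) : Defs.act s X munit = confine s X.
Proof. by rewrite /Defs.act rmul_unit // => w; apply: confine_sfixed. Qed.

Lemma deconf_unit s d : is_deconf s munit d ->
  exists u, d = mbasis u /\ forall k, Pf s u k = cunit F.
Proof.
move=> [d0 Hd]; rewrite act_unit in Hd.
have Hw w : \sum_v d v * conf_basis s v w = munit w.
  by rewrite -Hd ffunE.
have tge0 v w : 0 <= d v * conf_basis s v w by rewrite mulr_ge0 ?conf_ge0.
have Hv1 : \sum_v d v * conf_basis s v vone = 1 by rewrite Hw mbasisE eqxx.
have [v0 [H1 H2]] := sum1_int (fun v => tge0 v vone) Hv1.
simpl in H1, H2.
have zero w v : w != vone -> d v * conf_basis s v w = 0.
  move=> nw; have := Hw w; rewrite mbasisE (negbTE nw) => S.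
  exact: (psumr_eq0P (fun v _ => tge0 v w) S).
have dz v : v != v0 -> d v = 0.
  move=> nv; have [w Hpos] := conf_pos s v.
  case: (eqVneq w vone) => [ew|nw].
    have := H2 v nv; rewrite -ew => e.
    by move: e Hpos (d0 v); move: (d v) (conf_basis s v w) => A B; clear; nia.
  have := zero w v nw.
  by move: Hpos (d0 v); move: (d v) (conf_basis s v w) => A B; clear; nia.
have dv0 : d v0 = 1.
  by apply: (mul_eq1 H1) => //; apply: conf_ge0.
have ed : d = mbasis v0.
  apply/ffunP => v; rewrite mbasisE; case: (eqVneq v v0) => [->|nv]; first by rewrite dv0.
  by rewrite dz.
exists v0; split => //; apply: conf_unit_inv; rewrite -confine_basis -ed //.
Qed.

Lemma cpr_ones (s : seq L) : all (pred1 one) s -> cpr s = cunit F.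
Proof.
elim: s => [//|a s IH] /= /andP [/eqP -> h]; by rewrite IH // cmul1.
Qed.

Lemma deconf_ex s : is_deconf s munit munit.
Proof.
split; first by move=> v; rewrite mbasisE ler0n.
rewrite act_unit confine_basis; apply: conf_unit => k.
apply: cpr_ones; apply/allP => x /mapP [y _ ->]; by rewrite /= ffunE.
Qed.

Lemma prod_ind (w z : mvec) : \prod_k ((w k == z k) : nat)%:R = (w == z)%:R :> int.
Proof.
case: (eqVneq w z) => [->|ne]; first by rewrite big1 // => k _; rewrite eqxx.
have [k nk] : exists k, w k != z k.
  apply/existsP; apply: contraR ne; rewrite negb_exists => /forallP h.
  by apply/eqP/ffunP => k; move: (h k); rewrite negbK => /eqP.
by rewrite (bigD1 k) //= (negbTE nk) mul0r.
Qed.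

Lemma mmul_basis u v z : (forall k, cmul (cbasis (u k)) (cbasis (v k)) = cbasis (z k)) ->
  mmul (mbasis u) (mbasis v) = mbasis z.
Proof.
move=> h; apply/ffunP => w; rewrite ffunE.
rewrite (eq_bigr (fun a => (a == u)%:R * \sum_b mbasis v b * \prod_k (N (a k) (b k) (w k))%:R)).
  rewrite sum_ind.
  rewrite (eq_bigr (fun b => (b == v)%:R * \prod_k (N (u k) (b k) (w k))%:R)).
    rewrite sum_ind mbasisE -prod_ind; apply: eq_bigr => k _.
    by have := congr1 (fun f : celt F => f (w k)) (h k); rewrite cmul_basis !ffunE /= => ->.
  by move=> b _; rewrite mbasisE.
move=> a _; rewrite mbasisE mulr_sumr; apply: eq_bigr => b _; ring.
Qed.

Lemma result s u v z : (forall k, cmul (cbasis (u k)) (cbasis (v k)) = cbasis (z k)) ->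
  (forall k, Pf s z k = cunit F) ->
  Defs.act s (mmul (mmul (mbasis u) (mbasis v)) munit) munit = munit.
Proof.
move=> h1 h2; rewrite (mmul_basis h1) (@mmul_basis z vone z); last first.
  by move=> k; rewrite ffunE cmul1r.
by rewrite act_unit confine_basis conf_unit.
Qed.

End Multi.

Section Perm2.
Variable T : finType.
Implicit Types (s p : {perm T}) (x y : T).

Lemma moved_orbit s x y : s x != x -> y \in porbit s x -> s y != y.
Proof.
move=> sx yin; apply: contra sx => /eqP sy.
by move: yin; rewrite porbit_sym porbit_fix // => /set1P ->; rewrite sy.
Qed.

Lemma iter_inj s x a b : (a < #|porbit s x|)%N -> (b < #|porbit s x|)%N ->
  iter a s x = iter b s x -> a = b.
Proof.
move=> ha hb e; have U := uniq_traject_porbit s x.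
apply/eqP; rewrite -(nth_uniq x _ _ U) ?size_traject // !nth_traject // e //.
Qed.

Lemma iter_in s x k : iter k s x \in porbit s x.
Proof. by rewrite -permX mem_porbit. Qed.

End Perm2.

Section Ffac.
Variable F : fusion_rules.
Variable n : nat.
Local Notation munit := (munit F n).

Definition comps (ts : seq ('I_n * 'I_n)) := flatten [seq [:: t.1; t.2] | t <- ts].

Fixpoint good (sg : {perm 'I_n}) (ts : seq ('I_n * 'I_n)) : Prop :=
  match ts with
  | [::] => True
  | t :: r => t.1 != t.2 /\ sg t.1 = t.1 /\ t.1 \notin comps r /\ good sg r
  end.

Lemma accp_fix ts (sg : {perm 'I_n}) a : sg a = a -> a \notin comps ts ->
  (foldr (@Fstep F n) (sg, munit) ts).1 a = a.
Proof.
move=> sa; elim: ts => [//|t r IH]; rewrite /comps /= !inE !negb_or => /and3P [na nb nr].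
rewrite /rlcomp permM IH // tpermD // eq_sym //.
Qed.

Lemma Ffac_good ts (sg : {perm 'I_n}) : good sg ts -> Ffac F ts sg = munit.
Proof.
rewrite /Ffac; elim: ts => [//|t r IH] /= [ne [sf [nr gr]]].
rewrite (porbit_fix (accp_fix sf nr)) inE eq_sym (negbTE ne); exact: IH.
Qed.

Lemma comps_cat t1 t2 : comps (t1 ++ t2) = comps t1 ++ comps t2.
Proof. by rewrite /comps map_cat flatten_cat. Qed.

Lemma good_cat sg t1 t2 : good sg t1 -> good sg t2 ->
  (forall x, x \in comps t1 -> x \notin comps t2) -> good sg (t1 ++ t2).
Proof.
elim: t1 => [//|t r IH] /= [ne [sf [nr gr]]] g2 dis; split=> //; split=> //; split.
  rewrite comps_cat mem_cat negb_or nr /=; apply: dis; by rewrite !inE eqxx.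
apply: IH => // x xin; apply: dis; by rewrite !inE xin !orbT.
Qed.

Lemma good_chain (r sg : {perm 'I_n}) i : disjoint_perms r sg -> good sg (chain r i).
Proof.
move=> dis; rewrite /chain.
have l0 : (0 < #|porbit r i|)%N by rewrite lt0n card_porbit_neq0.
suff H : forall m j, (j + m <= #|porbit r i|.-1)%N ->
    good sg [seq (iter k r i, iter k.+1 r i) | k <- iota j m] by apply: H.
elim => [//|m IH] j hj.
have jl : (j.+1 < #|porbit r i|)%N by move: hj l0; clear; lia.
have hne : iter j r i != iter j.+1 r i.
  by apply/eqP => /iter_inj h; move: (h (ltnW jl) jl); lia.
rewrite /=; split=> //; split.
  case: (dis (iter j r i)) => // e; by move: hne; rewrite /= e eqxx.
split; last by apply: IH; move: hj; clear; lia.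
apply/negP => /flattenP [s0 /mapP [k /mapP [k' kin ->] ->]]; rewrite !inE => /orP [] /eqP e.
  move: kin; rewrite mem_iota => kin; move/andP: kin => [k1 k2].
  have hk : (k' < #|porbit r i|)%N by move: k2 hj; clear; lia.
  have := iter_inj (ltnW jl) hk e; move: k1; clear; lia.
move: kin; rewrite mem_iota => kin.
have e' : iter j r i = iter k'.+1 r i by rewrite e.
move/andP: kin => [k1 k2].
have hk : (k'.+1 < #|porbit r i|)%N by move: k2 hj; clear; lia.
have := iter_inj (ltnW jl) hk e'; move: k1; clear; lia.
Qed.

Lemma comps_chain (r : {perm 'I_n}) x y : y \in comps (chain r x) -> y \in porbit r x.
Proof.
move=> /flattenP [s0 /mapP [k /mapP [k' _ ->] ->]]; rewrite !inE => /orP [] /eqP ->;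
  exact: iter_in.
Qed.

Lemma comps_flat (r : {perm 'I_n}) st y : y \in comps (flatten [seq chain r x | x <- st]) ->
  exists2 x, x \in st & y \in porbit r x.
Proof.
elim: st => [//|x st IH] /=; rewrite comps_cat mem_cat => /orP [h|h].
  by exists x; rewrite ?mem_head // comps_chain.
by have [x' x'in yin] := IH h; exists x'; rewrite // inE x'in orbT.
Qed.

Lemma good_st (r sg : {perm 'I_n}) st : disjoint_perms r sg -> uniq (map (porbit r) st) ->
  good sg (flatten [seq chain r x | x <- st]).
Proof.
move=> dis; elim: st => [//|x st IH] /= /andP [nx ust].
apply: good_cat; [exact: good_chain | exact: IH | ].
move=> y /comps_chain yx; apply/negP => /comps_flat [x' x'in yx'].
move: nx; rewrite -(porbit_eq yx) (porbit_eq yx').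
by rewrite map_f.
Qed.

End Ffac.

Section CD.
Variable n : nat.
Implicit Types (r s : {perm 'I_n}).

Lemma cd_ex r : exists ts, cycle_decomp r ts.
Proof.
set filt := [seq O <- enum (porbits r) | (1 < #|pred_of_set O|)%N].
have H : forall l : seq {set 'I_n}, (forall O, O \in l -> O \in porbits r) ->
    map (porbit r) (pmap (fun O : {set 'I_n} => [pick y | y \in O]) l) = l.
  elim => [//|O l IH] hl /=.
  have [x _ eO] := imsetP (hl O (mem_head _ _)).
  case: pickP => [y yO|none]; last by move: (none x); rewrite eO porbit_id.
  rewrite /= IH; last by move=> O' O'in; apply: hl; rewrite inE O'in orbT.
  by congr (_ :: _); rewrite eO; apply: porbit_eq; rewrite -eO.
exists (flatten [seq chain r i | i <- pmap (fun O : {set 'I_n} => [pick y | y \in O]) filt]).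
exists (pmap (fun O : {set 'I_n} => [pick y | y \in O]) filt); split => //.
rewrite H // => O; rewrite mem_filter mem_enum => /andP [_ ->] //.
Qed.

Lemma cd_uniq r ts : cycle_decomp r ts -> exists st,
  [/\ uniq (map (porbit r) st), (forall x, x \in st -> r x != x) &
       ts = flatten [seq chain r x | x <- st]].
Proof.
move=> [st [pe ->]]; exists st; split => //.
  by rewrite (perm_uniq pe) filter_uniq // enum_uniq.
move=> x xin; have : porbit r x \in [seq O <- enum (porbits r) | (1 < #|pred_of_set O|)%N].
  by rewrite -(perm_mem pe) map_f.
rewrite mem_filter => /andP [h _]; apply/eqP => e; move: h; rewrite porbit_fix //.
by rewrite cards1.
Qed.

Lemma disj_fix r s k y : disjoint_perms r s -> r k = k -> y \in porbit s k -> r y = y.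
Proof.
move=> dis rk yin; case: (eqVneq (s k) k) => sk.
  by move: yin; rewrite porbit_fix // => /set1P ->.
by case: (dis y) => // e; move: (moved_orbit sk yin); rewrite e eqxx.
Qed.

Lemma porbit_tperm (i j : 'I_n) : i != j -> porbit (tperm i j) i = [set i; j].
Proof.
move=> ne; apply/eqP; rewrite eqEsubset; apply/andP; split.
  apply: porbit_closed; first by rewrite !inE eqxx.
  by move=> y /set2P [->|->]; rewrite ?tpermL ?tpermR !inE eqxx ?orbT.
apply/subsetP => y /set2P [->|->]; first exact: porbit_id.
by rewrite -{1}(tpermL i j); apply: porbit_sin; apply: porbit_id.
Qed.

Lemma cd_tperm (i j : 'I_n) ts : i != j -> cycle_decomp (tperm i j) ts ->
  [\/ ts = [::], ts = [:: (i, j)] | ts = [:: (j, i)]].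
Proof.
move=> ne cd; have [st [ust nt ets]] := cd_uniq cd.
have Pi := porbit_tperm ne.
have Pj : porbit (tperm i j) j = [set i; j].
  by rewrite (porbit_eq (x := i)) // Pi !inE eqxx orbT.
have Hx x : x \in st -> x = i \/ x = j.
  move/nt; case: (eqVneq x i) => [->|xi]; first by left.
  case: (eqVneq x j) => [->|xj]; first by right.
  by rewrite tpermD // 1?eq_sym // eqxx.
have ch x : x \in st -> chain (tperm i j) x = [:: (x, tperm i j x)].
  move=> /Hx [] ->; rewrite /chain ?Pi ?Pj cards2 ne //.
move: ust ets Hx ch nt; case: st => [|x [|y st']] /= ust -> Hx ch _.
- by constructor 1.
- rewrite ch ?mem_head // cats0; case: (Hx x (mem_head _ _)) => ->.
    by constructor 2; rewrite tpermL.
  by constructor 3; rewrite tpermR.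
- exfalso; move: ust; rewrite inE.
  have yin : y \in [:: x, y & st'] by rewrite !inE eqxx orbT.
  case: (Hx x (mem_head _ _)) => ->; case: (Hx y yin) => ->;
  by rewrite ?Pi ?Pj eqxx.
Qed.

End CD.

Section Main.
Variable F : fusion_rules.
Hypothesis ax : fusion_ring_axioms F.
Variable n : nat.
Local Notation L := (lab F).
Local Notation N := (@Nf F).
Local Notation one := (lunit F).
Local Notation cpr := (@Defs.cprod F).
Local Notation mvec := (mvec F n).
Local Notation melt := (melt F n).
Local Notation vone := (vone F n).
Local Notation munit := (munit F n).
Implicit Types (r s p : {perm 'I_n}) (u v w z : mvec).

Lemma fix_one s v k : s k = k -> Pf s v k = cunit F -> v k = one.
Proof.
move=> sk; rewrite /Pf porbit_fix // enum_set1 /= cmul1r // => e.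
have := congr1 (fun f : celt F => f (v k)) e; rewrite !ffunE eqxx.
by case: eqP.
Qed.

Lemma fusion_ex x y : is_deconf x.1 x.2 munit -> is_deconf y.1 y.2 munit ->
  exists d0 : defect F n, is_fusion x y d0.
Proof.
move=> hx hy; have [ts cd] := cd_ex x.1.
by eexists; exists munit, munit, ts; split; [exact: hx | split; [exact: hy | split]].
Qed.

Lemma fuse_disj r s : disjoint_perms r s -> fuses_to (bare F r) (bare F s) (bare F (rlcomp r s)).
Proof.
move=> dis; split; first by apply: fusion_ex; apply: deconf_ex.
move=> z0 [dx [dy [ts [hx [hy [cd ->]]]]]] /=.
rewrite /= in hx hy cd.
have [st [ust _ ets]] := cd_uniq cd.
rewrite ets Ffac_good; last exact: good_st.
have [u [-> hu]] := deconf_unit ax hx; have [v [-> hv]] := deconf_unit ax hy.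
rewrite /bare; congr pair.
pose z : mvec := [ffun k => if r k == k then v k else u k].
apply: (result ax (z := z)).
  move=> k; rewrite ffunE; case: eqP => rk.
    by rewrite (fix_one rk (hu k)) cmul1.
  have sk : s k = k by case: (dis k).
  by rewrite (fix_one sk (hv k)) cmul1r.
move=> k; rewrite /Pf; case: (eqVneq (r k) k) => rk.
  have -> : porbit (rlcomp r s) k = porbit s k.
    apply: porbit_agree => y yin; rewrite /rlcomp permM.
    by apply: (disj_fix dis rk); apply: porbit_sin.
  rewrite -(hv k) /Pf; congr cpr; apply/eq_in_map => y; rewrite mem_enum => yin.
  by rewrite /z ffunE (disj_fix dis rk yin) eqxx.
have mv y : y \in porbit r k -> r y != y by move=> yin; apply: moved_orbit rk yin.
have -> : porbit (rlcomp r s) k = porbit r k.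
  apply: porbit_agree => y yin; rewrite /rlcomp permM.
  by case: (dis y) => [e|->//]; move: (mv y yin); rewrite e eqxx.
rewrite -(hu k) /Pf; congr cpr; apply/eq_in_map => y; rewrite mem_enum => yin.
by rewrite /z ffunE (negbTE (mv y yin)).
Qed.

Lemma rlcomp_disjC r s : disjoint_perms r s -> rlcomp r s = rlcomp s r.
Proof.
move=> dis; apply/permP => x; rewrite /rlcomp !permM.
case: (eqVneq (r x) x) => rx.
  by rewrite rx (disj_fix dis rx (porbit_sin (porbit_id s x))).
have sx : s x = x by case: (dis x) => // e; move: rx; rewrite e eqxx.
have dis' : disjoint_perms s r by move=> y; case: (dis y); [right|left].
by rewrite sx (disj_fix dis' sx (porbit_sin (porbit_id r x))).
Qed.

Lemma merge_orbit p i j : p i = i -> i != j ->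
  porbit (rlcomp (tperm i j) p) i = i |: porbit p j.
Proof.
move=> pi ne; set q := rlcomp (tperm i j) p.
have qE y : q y = tperm i j (p y) by rewrite /q /rlcomp permM.
have iOj : i \notin porbit p j by rewrite porbit_sym porbit_fix // inE eq_sym.
apply/eqP; rewrite eqEsubset; apply/andP; split.
  apply: porbit_closed; first by rewrite setU11.
  move=> y; rewrite in_setU1 => /orP [/eqP ->|yin].
    by rewrite qE pi tpermL in_setU1 porbit_id orbT.
  have pyin := porbit_sin yin; rewrite qE.
  case: (eqVneq (p y) j) => [->|nj]; first by rewrite tpermR setU11.
  have ni : p y != i by apply: contraNneq iOj => <-.
  by rewrite tpermD 1?eq_sym // in_setU1 pyin orbT.
have qi : q i = j by rewrite qE pi tpermL.
have jin : j \in porbit q i by rewrite -qi porbit_sin // porbit_id.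
rewrite subUset sub1set porbit_id /= -(porbit_eq jin).
have sub : porbit p j \subset porbit p j :&: porbit q j.
  apply: porbit_closed; first by rewrite inE !porbit_id.
  move=> y; rewrite inE => /andP [y1 y2]; rewrite inE porbit_sin //=.
  case: (eqVneq (p y) j) => [->|nj]; first exact: porbit_id.
  have ni : p y != i by apply: contraNneq iOj => <-; apply: porbit_sin.
  have qy : q y = p y by rewrite qE tpermD // eq_sym.
  by rewrite -qy porbit_sin.
by apply: (subset_trans sub); apply: subsetIr.
Qed.

Lemma fuse_trans p i j : p i = i -> i != j ->
  fuses_to (bare F (tperm i j)) (bare F p) (bare F (rlcomp (tperm i j) p)).
Proof.
move=> pi ne; split; first by apply: fusion_ex; apply: deconf_ex.
move=> z0 [dx [dy [ts [hx [hy [cd ->]]]]]] /=.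
rewrite /= in hx hy cd.
have iOj : i \notin porbit p j by rewrite porbit_sym porbit_fix // inE eq_sym.
have Ff : Ffac F ts p = munit.
  case: (cd_tperm ne cd) => ->; rewrite /Ffac //=.
    by rewrite porbit_fix // inE eq_sym (negbTE ne).
  by rewrite (negbTE iOj).
rewrite Ff.
have [u [-> hu]] := deconf_unit ax hx; have [v [-> hv]] := deconf_unit ax hy.
rewrite /bare; congr pair.
have uo k : k != i -> k != j -> u k = one.
  by move=> ki kj; apply: (fix_one _ (hu k)); rewrite tpermD // eq_sym.
have vi : v i = one by apply: (fix_one pi (hv i)).
have huij : cmul (cbasis (u i)) (cbasis (u j)) = cunit F.
  rewrite -(hu i) /Pf porbit_tperm //.
  have pe : perm_eq (enum [set i; j]) [:: i; j].
    apply: uniq_perm; rewrite ?enum_uniq //= ?inE ?ne // => x.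
    by rewrite mem_enum !inE.
  by rewrite (cpr_perm ax (perm_map u pe)) /= cmul1r.
have [zj hzj] : exists zj, forall e, N (u j) (v j) e = (e == zj) :> nat.
  apply: (inv_simple ax (c' := u i)) => e.
  have := congr1 (fun f : celt F => f e) huij; rewrite cmul_basis !ffunE => /eqP.
  by rewrite eqr_nat => /eqP; rewrite NC.
pose z : mvec := [ffun k => if k == i then u i else if k == j then zj else v k].
have hzj' : cmul (cbasis (u j)) (cbasis (v j)) = cbasis zj.
  by apply/ffunP => e; rewrite cmul_basis !ffunE hzj.
apply: (result ax (z := z)).
  move=> k; rewrite /z ffunE; case: (eqVneq k i) => [->|ki].
    by rewrite vi; apply: cmul1r.
  case: (eqVneq k j) => [->//|kj].
  by rewrite uo //; apply: cmul1.
move=> k; set q := rlcomp (tperm i j) p.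
have qE y : q y = tperm i j (p y) by rewrite /q /rlcomp permM.
case: (boolP (k \in i |: porbit p j)) => kin.
  have -> : Pf q z k = Pf q z i by apply: Pf_eq; rewrite merge_orbit.
  rewrite /Pf merge_orbit //.
  set R := rem j (enum (porbit p j)).
  have jO : j \in enum (porbit p j) by rewrite mem_enum porbit_id.
  have pe1 : perm_eq (enum (porbit p j)) (j :: R) by apply: perm_to_rem.
  have pe : perm_eq (enum (i |: porbit p j)) (i :: j :: R).
    apply: (perm_trans (y := i :: enum (porbit p j))); last by rewrite perm_cons.
    apply: uniq_perm; rewrite ?enum_uniq //= ?mem_enum ?iOj ?enum_uniq // => x.
    by rewrite mem_enum !inE mem_enum.
  have Rz : map z R = map v R.
    apply/eq_in_map => x xR; rewrite /z ffunE.
    have xO : x \in porbit p j by rewrite -mem_enum; apply: mem_rem xR.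
    have xj : x != j by move: xR; rewrite mem_rem_uniq ?enum_uniq // inE => /andP [].
    have xi : x != i by apply: contraNneq iOj => <-.
    by rewrite (negbTE xi) (negbTE xj).
  rewrite (cpr_perm ax (perm_map z pe)) /= Rz.
  have zi : z i = u i by rewrite /z ffunE eqxx.
  have zjE : z j = zj by rewrite /z ffunE eq_sym (negbTE ne) eqxx.
  rewrite zi zjE -hzj' cmulA //.
  have := hv j; rewrite /Pf (cpr_perm ax (perm_map v pe1)) /= => ->.
  by rewrite cmul1r.
have nij y : y \in porbit p k -> (y != i) && (y != j).
  move=> yin; apply/andP; split.
    apply/eqP => e; move: kin; rewrite in_setU1; subst y.
    by move: yin; rewrite porbit_sym porbit_fix // => /set1P ->; rewrite eqxx.
  apply/eqP => e; move: kin; rewrite in_setU1; subst y.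
  by rewrite porbit_sym yin orbT.
rewrite /Pf; have -> : porbit q k = porbit p k.
  apply: porbit_agree => y yin; rewrite qE.
  by have /andP [a b] := nij _ (porbit_sin yin); rewrite tpermD // eq_sym.
rewrite -(hv k) /Pf; congr cpr; apply/eq_in_map => y; rewrite mem_enum => yin.
by have /andP [a b] := nij _ yin; rewrite /z ffunE (negbTE a) (negbTE b).
Qed.

End Main.

Lemma decomp (F : fusion_rules) (ax : fusion_ring_axioms F) (n : nat) (sg : {perm 'I_n}) :
  exists ts : seq {perm 'I_n},
     (forall t, t \in ts -> is_transposition t) /\
     sg = perm_seqprod ts /\ nested ts (bare F sg).
Proof.
have [m] := ubnP #|[set x | sg x != x]|; elim: m sg => // m IH sg hm.
case: (pickP (fun x => sg x != x)) => [i hi|none]; last first.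
  have -> : sg = 1%g by apply/permP => x; rewrite perm1; move: (none x) => /negbFE/eqP.
  by exists [::].
set j := sg i; set t := tperm i j; set p := (sg * t)%g.
have ne : i != j by rewrite eq_sym.
have pi : p i = i by rewrite /p permM tpermR.
have lt : (#|[set x | p x != x]| < #|[set x | sg x != x]|)%N.
  apply: proper_card; apply/properP; split.
    apply/subsetP => x; rewrite !inE; apply: contra => /eqP sx.
    have xi : i != x by apply/eqP => e; move: hi; rewrite e sx eqxx.
    have xj : j != x.
      apply/eqP => ejx; move: sx; rewrite -ejx /j => /perm_inj e.
      by move: hi; rewrite e eqxx.
    by rewrite /p permM sx tpermD.
  by exists i; rewrite !inE ?hi // pi eqxx.
have [ts' [htr [ep hn]]] := IH p (leq_trans lt hm).
have es : sg = rlcomp t p by rewrite /rlcomp /p -mulgA tperm2 mulg1.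
exists (t :: ts'); split.
  move=> x; rewrite inE => /orP [/eqP ->|xin]; last exact: htr.
  by exists i, j.
split; first by rewrite /= -ep.
move: hn ep; case: ts' {htr} => [|y ys] /= hn ep.
  by rewrite es ep /rlcomp mul1g.
exists (bare F p); split => //.
by rewrite es; apply: fuse_trans.
Qed.

Unset Implicit Arguments.
Local Close Scope ring_scope.

Theorem proposition4p17 (F : fusion_rules) (n : nat) :
  fusion_ring_axioms F -> (2 <= n)%N ->
  (forall r s : {perm 'I_n}, disjoint_perms r s ->
     fuses_to (bare F r) (bare F s) (bare F (rlcomp r s)) /\
     fuses_to (bare F s) (bare F r) (bare F (rlcomp r s)))
  /\
  (forall s : {perm 'I_n}, exists ts : seq {perm 'I_n},
     (forall t, t \in ts -> is_transposition t) /\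
     s = perm_seqprod ts /\ nested ts (bare F s)).
Proof.
move=> ax _; split; last by move=> s; apply: decomp.
move=> r s dis; split; first exact: fuse_disj.
have dis' : disjoint_perms s r by move=> y; case: (dis y); [right|left].
rewrite rlcomp_disjC //; exact: fuse_disj.
Qed.
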